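(* Let $a,b$ be integers with $0<b<a$, let $S=\langle a,a+1,\ldots,a+b\rangle$ with conductor $c$, and let $m\ge 2c-1$. Let $r$ be a positive integer, let $\mathrm h(r)$ be the unique integer $q$ with $q+\frac12 bq(q-1)\le r<1+q+\frac12 bq(q+1)$, and write $r=\mathrm h(r)+\frac12 b\mathrm h(r)(\mathrm h(r)-1)+k\mathrm h(r)+j$ with integers $-1\le k\le b-1$ and $0<j\le\mathrm h(r)$ (with $k=-1$ only when $r=\mathrm h(r)+\frac12 b\mathrm h(r)(\mathrm h(r)-1)$, and then $j=\mathrm h(r)$). If $M$ is an ordered $(S,m,r)$-amenable set, then $\sharp(M\cap[m,m+a+b))=(\mathrm h(r)-1)b+k+2$.
   Context: For $x\in S$, $\mathrm D(x)=\{\alpha\in S\mid x-\alpha\in S\}$. A set $M=\{m_1<\cdots<m_r\}\subseteq S$ with $2c-1\le m=m_1$ is $(S,m,r)$-amenable if $\mathrm D(m_i)\cap[m,\infty)\subseteq M$ for all $i$. The ground is $\{m,m+1,\ldots,m+a+b-1\}$, and the shadow of $M$ is $M\cap\{m,\ldots,m+a+b-1\}$. For a finite $M\subseteq S\cap[m,\infty)$, let $J$ be the set of $j\in\{0,\ldots,a-1\}$ such that $x-(m+b)=qa+j$ for some $x\in M$ and some integer $q\ge 0$; if $J\neq\emptyset$ let $j_0=\max J$ and let the wagon of $M$ be $W=\{x\in M\mid x-(m+b)=qa+j_0\text{ for some integer }q\}$. An element $P\in M$ is the pivot of $M$ if either $P<m+b$ and $P=\max M$, or $P=\max W$. An $(S,m,r)$-amenable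 set $M$ with pivot $P$ is ordered amenable if (i) its shadow is $\{m,m+1,\ldots,m+t\}$ for some integer $0\le t<a+b-1$, and (ii) whenever $s\in S\setminus M$ is such that $M\cup\{s\}$ is $(S,m,r+1)$-amenable with the same shadow as $M$, we have $s=P+a$. *)

(* Defs.v *)
From HB Require Import structures.
From mathcomp Require Import all_boot all_order all_algebra.
From mathcomp Require Import finmap.
Set Implicit Arguments. Unset Strict Implicit. Unset Printing Implicit Defensive.
Import Order.TTheory GRing.Theory Num.Theory.
Local Open Scope fset_scope.

Definition inS (a b n : nat) : Prop :=
  exists s : seq nat, all (fun g => (a <= g <= a + b)%N) s /\ sumn s = n.

Definition is_conductor (a b c : nat) : Prop :=
  (forall n, c <= n -> inS a b n) /\
  (forall c', (forall n, c' <= n -> inS a b n) -> c <= c').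

Definition inD (a b x alpha : nat) : Prop :=
  inS a b alpha /\ alpha <= x /\ inS a b (x - alpha).

Definition amenable (a b c m r : nat) (M : {fset nat}) : Prop :=
  [/\ #|` M| = r,
      (forall x, x \in M -> inS a b x),
      (m \in M /\ forall x, x \in M -> m <= x),
      2 * c - 1 <= m
    & (forall x alpha, x \in M -> inD a b x alpha -> m <= alpha -> alpha \in M)].

Definition shadow (a b m : nat) (M : {fset nat}) : {fset nat} :=
  [fset x in M | (m <= x < m + a + b)%N].

Definition inJ (a b m : nat) (M : {fset nat}) (j : nat) : Prop :=
  j < a /\ exists x q, x \in M /\ x = (m + b + q * a + j)%N.

Definition is_j0 (a b m : nat) (M : {fset nat}) (j0 : nat) : Prop :=
  inJ a b m M j0 /\ forall j, inJ a b m M j -> j <= j0.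

Definition inW (a b m : nat) (M : {fset nat}) (j0 x : nat) : Prop :=
  x \in M /\ exists q : int, (x%:Z = (m + b)%:Z + q * a%:Z + j0%:Z)%R.

Definition is_pivot (a b m : nat) (M : {fset nat}) (P : nat) : Prop :=
  P \in M /\
  (((P < m + b)%N /\ forall x, x \in M -> x <= P) \/
   (exists j0, is_j0 a b m M j0 /\ inW a b m M j0 P /\
               forall x, inW a b m M j0 x -> x <= P)).

Definition ordered_amenable (a b c m r : nat) (M : {fset nat}) : Prop :=
  amenable a b c m r M /\
  exists P, is_pivot a b m M P /\
    (exists t, (t < a + b - 1)%N /\
       forall x, (x \in shadow a b m M) = (m <= x <= m + t)%N) /\
    (forall s, inS a b s -> s \notin M ->
       amenable a b c m r.+1 (M `|` [fset s]) ->
       shadow a b m (M `|` [fset s]) = shadow a b m M ->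
       s = (P + a)%N).

(* Main.v *)
Require Import Defs.
From HB Require Import structures.
From mathcomp Require Import all_boot all_order all_algebra.
From mathcomp Require Import finmap zify.
Import Order.TTheory GRing.Theory Num.Theory.
Set Implicit Arguments. Unset Strict Implicit. Unset Printing Implicit Defensive.

Fixpoint fcnt (b n : nat) : nat :=
  match n with 0 => 0 | n'.+1 => fcnt b n' + n' %/ b + 1 end.

Lemma fcnt_formula b H k : 0 < b -> k <= b ->
  2 * fcnt b (H * b + k) = b * H * (H + 1) + 2 * (H + 1) * k.
Proof.
move=> b0; elim: H k => [|H IH] k.
  rewrite mul0n add0n; elim: k => [|k IHk] kb; first by rewrite /=; lia.
  rewrite /= divn_small; last by lia.
  rewrite !mulnDr IHk; lia.
have base : 2 * fcnt b (H.+1 * b) = b * H.+1 * (H.+1 + 1).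
  rewrite [H.+1 * b]mulSnr IH //. nia.
elim: k => [|k IHk] kb; first by rewrite addn0 base; lia.
rewrite addnS /= !mulnDr IHk; last by lia.
rewrite divnMDl // divn_small; last by lia.
nia.
Qed.

Lemma fcnt_lt b n n' : n < n' -> fcnt b n < fcnt b n'.
Proof.
elim: n' => [|n' IH] //= H; rewrite ltnS leq_eqVlt in H.
case/orP: H => [/eqP->|/IH ?]; set d := n' %/ b; lia.
Qed.
Lemma inS_gen a b g : a <= g <= a + b -> inS a b g.
Proof. by move=> H; exists [:: g]; rewrite /= H addn0. Qed.

Lemma inS_ge a b c m n : is_conductor a b c -> 2 * c - 1 <= m -> m <= n -> inS a b n.
Proof. by case=> H _ H1 H2; apply: H; lia. Qed.

Lemma clos_step a b c m r M (x g : nat) : is_conductor a b c -> amenable a b c m r M ->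
  x \in M -> a <= g <= a + b -> m + g <= x -> x - g \in M.
Proof.
move=> Hc [_ _ _ Hm Hcl] xM gab mgx; apply: (Hcl x) => //; last by lia.
split; first by apply: (inS_ge Hc Hm); lia.
split; first by lia.
have -> : x - (x - g) = g by lia.
exact: inS_gen.
Qed.

Lemma add_closed a b c m r M (z alpha : nat) : is_conductor a b c -> amenable a b c m r M ->
  (forall g, a <= g <= a + b -> m + g <= z -> z - g \in M) ->
  inD a b z alpha -> m <= alpha -> alpha \in M \/ alpha = z.
Proof.
move=> Hc Ham Hz [Sa [az [s [Hs Hsum]]]] ma.
case: s Hs Hsum => [|g s] /=; first by move=> _ H; right; lia.
case/andP=> Hg Hs Hsum.
left; case: Ham => _ _ _ _ Hcl.
apply: (Hcl (z - g)) => //; first by apply: Hz => //; lia.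
split=> //; split; first by lia.
by exists s; split => //; lia.
Qed.

Lemma ext_amenable a b c m r M (z : nat) : is_conductor a b c -> amenable a b c m r M ->
  z \notin M -> m + a + b <= z ->
  (forall g, a <= g <= a + b -> z - g \in M) ->
  amenable a b c m r.+1 (M `|` [fset z])%fset /\
  shadow a b m (M `|` [fset z])%fset = shadow a b m M.
Proof.
move=> Hc Ham zM mz Hz.
have Ham' := Ham; case: Ham' => Hcard HinS [HmM Hmin] Hm Hcl.
split.
  split => //.
  - by rewrite fsetUC cardfsU1 zM Hcard.
  - move=> x; rewrite !inE => /orP [/HinS //|/eqP ->].
    by apply: (inS_ge Hc Hm); lia.
  - split; first by rewrite !inE HmM.
    by move=> x; rewrite !inE => /orP [/Hmin //|/eqP ->]; lia.
  - move=> x alpha; rewrite !inE => /orP [xM Hd ma|/eqP -> Hd ma].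
      by rewrite (Hcl x alpha).
    case: (add_closed Hc Ham _ Hd ma) => [g gab _|->|->]; first exact: Hz.
      by [].
    by rewrite eqxx orbT.
apply/fsetP => x; rewrite !inE.
case: (x =P z) => [->|_]; last by rewrite orbF.
rewrite orbT (negbTE zM) /=; apply/negbTE; lia.
Qed.

Definition fullLt (a b m t x : nat) : Prop :=
  exists q, m + q * (a + b) <= x < m + q * a + t.

Definition col (a b m n : nat) : {fset nat} :=
  [fset x in map (fun q => (m + q * a + n)%N) (iota 0 (n %/ b).+1)]%fset.

Fixpoint FS (a b m n : nat) : {fset nat} :=
  match n with 0 => fset0 | n'.+1 => (FS a b m n' `|` col a b m n')%fset end.

Lemma mem_col a b m n x : 0 < b ->
  (x \in col a b m n) = [exists q : 'I_(n.+1), (q * b <= n) && (x == m + q * a + n)].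
Proof.
move=> b0; rewrite /col in_fset; apply/mapP/existsP.
  case=> q; rewrite mem_iota add0n ltnS leq_divRL // => /andP [_ qb] ->.
  have qn : q < n.+1 by move: qb; case: q => // q; nia.
  by exists (Ordinal qn); rewrite /= qb eqxx.
case=> q /andP [qb /eqP ->]; exists (nat_of_ord q) => //.
by rewrite mem_iota add0n ltnS leq_divRL // qb.
Qed.

Lemma mem_FS a b m n x : 0 < b -> (x \in FS a b m n) <-> fullLt a b m n x.
Proof.
move=> b0; elim: n x => [|n IH] x /=.
  by rewrite inE; split => // [[q]]; nia.
rewrite inE mem_col //; split.
  case/orP=> [/IH [q Hq]|/existsP [q /andP [qb /eqP ->]]].
    by exists q; lia.
  by exists q; nia.
case=> q Hq; case: (ltnP x (m + q * a + n)) => H.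
  by apply/orP; left; apply/IH; exists q; lia.
apply/orP; right; apply/existsP.
have qn : q < n.+1 by nia.
by exists (Ordinal qn); rewrite /=; apply/andP; split; [nia|apply/eqP; lia].
Qed.

Lemma card_col a b m n : 0 < a -> #|` col a b m n|%fset = (n %/ b).+1.
Proof.
move=> a0; rewrite /col card_fseq undup_id ?size_map ?size_iota //.
rewrite map_inj_uniq ?iota_uniq // => q q' /eqP; rewrite eqn_add2r eqn_add2l.
by rewrite eqn_pmul2r // => /eqP.
Qed.

Lemma card_FS a b m n : 0 < b -> 0 < a -> n <= a + b -> #|` FS a b m n|%fset = fcnt b n.
Proof.
move=> b0 a0; elim: n => [|n IH] Hn; first exact: cardfs0.
rewrite /=.
have H0 : (FS a b m n `&` col a b m n)%fset = fset0.
  apply/fsetP => x; rewrite in_fsetI in_fset0; apply/negbTE/negP => /andP [/(mem_FS _ _ _ _ b0) [p Hp]].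
  rewrite mem_col // => /existsP [q /andP [qb /eqP Hx]].
  have qp : q < p.
    have : q * a < p * a by lia.
    by rewrite ltn_pmul2r.
  nia.
have := cardfsUI (FS a b m n) (col a b m n).
rewrite H0 cardfs0 addn0 IH ?card_col //; last by lia.
move->; lia.
Qed.

Local Open Scope fset_scope.

Theorem corollary4p19 (a b c m r : nat) (M : {fset nat}) (h : nat) (k : int) (j : nat) :
  (0 < b)%N -> (b < a)%N ->
  is_conductor a b c ->
  (2 * c - 1 <= m)%N ->
  (0 < r)%N ->
  (* h = h(r): q + b q (q-1)/2 <= r < 1 + q + b q (q+1)/2, doubled *)
  (2 * h + b * (h * (h - 1)) <= 2 * r < 2 + 2 * h + b * (h * (h + 1)))%N ->
  (* r = h + b h (h-1)/2 + k h + j, doubled, with -1 <= k <= b-1, 0 < j <= h *)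
  (-1 <= k <= b%:Z - 1)%R ->
  (0 < j <= h)%N ->
  ((2 * r)%:Z = (2 * h + b * (h * (h - 1)))%:Z + 2 * k * h%:Z + 2 * j%:Z)%R ->
  ordered_amenable a b c m r M ->
  ((#|` shadow a b m M|)%:Z = (h%:Z - 1) * b%:Z + k + 2)%R.
Proof.
Local Open Scope nat_scope.
move=> b0 ba Hc Hm r0 Hh Hk Hj Heq [Ham [P [Hpiv [[t [Ht Hsh]] Hext]]]].
have Ham' := Ham; case: Ham' => Hcard HinS [HmM Hmin] Hm' Hcl.
have a0 : (0 < a)%N by lia.
have shM : forall x, x \in M -> (x < m + a + b)%N -> (x <= m + t)%N.
  move=> x xM xl.
  have : x \in shadow a b m M by rewrite !inE xM (Hmin x xM) xl.
  by rewrite Hsh => /andP [].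
have Mt : forall y, (y <= t)%N -> m + y \in M.
  move=> y yt; have : m + y \in shadow a b m M by rewrite Hsh; apply/andP; lia.
  by rewrite inE => /andP [].
have ClaimA : forall x, x \in M -> fullLt a b m t.+1 x.
  elim/ltn_ind => x IH xM.
  case: (ltnP x (m + a + b)) => xl.
    by exists 0; have := shM x xM xl; have := Hmin x xM; lia.
  have H1 : x - (a + b) \in M by apply: (clos_step Hc Ham xM) => //; lia.
  have [q Hq] := IH (x - (a + b)) ltac:(lia) H1.
  case: (ltnP (x - a) (m + q * a + t.+1)) => H2.
    by exists q.+1; rewrite !mulSn; lia.
  exfalso.
  have H3 : x - (x - (m + q * a + t.+1)) \in M.
    by apply: (clos_step Hc Ham xM) => //; lia.
  have [p Hp] := IH (x - (x - (m + q * a + t.+1))) ltac:(lia) H3.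
  have qp : (q < p)%N.
    have : (q * a < p * a)%N by lia.
    by rewrite ltn_pmul2r.
  have pa : (q.+1 * a <= p * a)%N by rewrite leq_mul2r qp orbT.
  have pb : (b <= p * b)%N by rewrite leq_pmull //; lia.
  rewrite mulSn in pa; rewrite mulnDr in Hp; lia.
have ClaimB : forall x, fullLt a b m t x -> x \in M.
  elim/ltn_ind => x IH [q Hq].
  case: q Hq => [|q] Hq.
    have -> : x = m + (x - m) by lia.
    by apply: Mt; lia.
  rewrite !mulSn mulnDr in Hq.
  case xM: (x \in M) => //; exfalso.
  have Hz : forall g, (a <= g <= a + b)%N -> x - g \in M.
    move=> g gab; apply: IH; first by lia.
    by exists q; rewrite mulnDr; lia.
  have [Ham2 Hsh2] := ext_amenable (z:=x) Hc Ham (negbT xM) ltac:(lia) Hz.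
  have xPa := Hext x (inS_ge (n:=x) Hc Hm' ltac:(lia)) (negbT xM) Ham2 Hsh2.
  case: Hpiv => PM [[Pb _]|[j0 [[[j0a _] j0max] [[_ [Q HQ]] _]]]].
    lia.
  have Jt : inJ a b m M (t - b).
    split; first by lia.
    by exists (m + t), 0; split; [apply: Mt | lia].
  have tj0 := j0max _ Jt.
  have H1 : ((Q + 1) * a%:Z < (q.+1)%:Z * a%:Z)%R by lia.
  rewrite ltr_pM2r in H1; last by lia.
  have H2 : ((Q + 1) * a%:Z <= q%:Z * a%:Z)%R by rewrite ler_pM2r; lia.
  lia.
have sub1 : M `<=` FS a b m t.+1.
  by apply/fsubsetP => x xM; apply/(mem_FS _ _ _ _ b0); exact: ClaimA.
have c1 := fsubset_leq_card sub1.
rewrite card_FS // in c1; last by lia.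
have nt : m + t \notin FS a b m t.
  by apply/negP => /(mem_FS _ _ _ _ b0) [[|p] Hp]; [lia | rewrite mulSn in Hp; lia].
have sub2 : (m + t) |` FS a b m t `<=` M.
  apply/fsubsetP => x; rewrite !inE => /orP [/eqP ->|/(mem_FS _ _ _ _ b0) /ClaimB //].
  exact: Mt.
have c2 := fsubset_leq_card sub2.
rewrite cardfsU1 nt card_FS // in c2; last by lia.
rewrite Hcard in c1 c2.
have [k' Ek] : exists k' : nat, k = (k'%:Z - 1)%R.
  by exists (absz (k + 1)%R); lia.
subst k.
case: h Hh Hj Heq => [|h'] Hh Hj Heq; first by lia.
have kb : (k' <= b)%N by lia.
have F := fcnt_formula h' b0 kb.
have Er : r = fcnt b (h' * b + k') + j.
  move: Heq F; rewrite subn1 succnK; set f := fcnt _ _; lia.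
have Ecard : #|` shadow a b m M| = t.+1.
  have -> : shadow a b m M = [fset x in iota m t.+1].
    by apply/fsetP => x; rewrite Hsh in_fset mem_iota addnS ltnS.
  by rewrite card_fseq undup_id ?iota_uniq // size_iota.
rewrite Ecard.
have mono : forall n n', (n <= n')%N -> (fcnt b n <= fcnt b n')%N.
  move=> n n'; rewrite leq_eqVlt => /orP [/eqP ->//|/(fcnt_lt b) ?]; lia.
case: (ltngtP t (h' * b + k')) => [lt|gt|eq].
- have := mono _ _ lt; lia.
- have := mono _ _ gt => /=.
  have : (h' <= (h' * b + k') %/ b)%N by rewrite leq_divRL // leq_addr.
  set d := (_ %/ _); lia.
- rewrite eq; lia.
Qed.
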